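(* Let $G,H,L$ be convergence groups such that every compact subset of $\Gamma_s(G,L)$ is equicontinuous, and let $u:G\times H\to L$ be a separately continuous bihomomorphism. Then $u$ is jointly continuous in each of the following cases: (i) $H$ is locally compact; (ii) $G$ and $H$ are first countable and $L$ is a topological group.
   Context: All groups are abelian. A convergence structure on a set $X$ assigns to each $x$ a collection of filters converging to $x$. This assignment must satisfy three conditions: point ultrafilters converge to their point; finite intersections of filters converging to $x$ converge to $x$; and finer filters of convergent filters converge. A map is continuous if it sends filters converging to $x$ to filters converging to the image of $x$. A convergence group is an abelian group with a convergence structure such that $\mathcal F\to x$, $\mathcal G\to y$ imply $\mathcal F-\mathcal G\to x-y$. Topological groups are convergence groups. $G\times H$ carries the product convergence structure, in which a filter converges iff its projections converge. A convergence space is Hausdorff if limits are unique. A subset $K$ is compact if every ultrafilter containing $K$ converges to a point of $K$. A convergence space is locally compact if it is Hausdorff and each convergent filter contains a compact set. A convergence space is first countable if for every filter $\mathcal F\to x$ there is a filter $\mathcal V\subseteq\mathcal F$ with a countable base such that $\mathcal V\to x$. A bihomomorphism is a map that is a homomorphism in each variable. It is separately continuous if it is continuous in each variable separately. $\Gamma(G,L)$ is the group of continuous homomorphisms $G\to L$, and $\Gamma_s(G,L)$ is $\Gamma(G,L)$ with the topology of pointwise convergence. A set $M\subseteq\Gamma(G,L)$ is equicontinuous if for every filter $\mathcal F\to0$ in $G$, the filter generated by $\{\varphi(x):\varphi\in M,x\in F\}$, $F\in\mathcal F$, converges to $0$ in $L$. *)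

(* Defs.v *)
From HB Require Import structures.
From mathcomp Require Import all_boot all_algebra.
Set Implicit Arguments. Unset Strict Implicit. Unset Printing Implicit Defensive.
Import GRing.Theory.
Local Open Scope ring_scope.

Definition set_family (X : Type) := (X -> Prop) -> Prop.

Definition is_filter (X : Type) (F : set_family X) : Prop :=
  F (fun _ => True) /\
  ~ F (fun _ => False) /\
  (forall A B, F A -> F B -> F (fun z => A z /\ B z)) /\
  (forall A B : X -> Prop, (forall z, A z -> B z) -> F A -> F B).

Definition ultrafilter (X : Type) (F : set_family X) : Prop :=
  is_filter F /\ forall A : X -> Prop, F A \/ F (fun z => ~ A z).

Definition principal (X : Type) (x : X) : set_family X := fun A => A x.

Definition fmeet (X : Type) (F G : set_family X) : set_family X :=
  fun A => F A /\ G A.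

Definition fmap (X Y : Type) (f : X -> Y) (F : set_family X) : set_family Y :=
  fun B => F (fun x => B (f x)).

Definition fprod (X Y : Type) (F : set_family X) (G : set_family Y)
  : set_family (X * Y) :=
  fun S => exists A B, F A /\ G B /\ forall a b, A a -> B b -> S (a, b).

Record convergence (X : Type) := Convergence {
  conv : set_family X -> X -> Prop;
  conv_point : forall x, conv (principal x) x;
  conv_meet : forall F G x, is_filter F -> is_filter G ->
     conv F x -> conv G x -> conv (fmeet F G) x;
  conv_finer : forall F G x, is_filter F -> is_filter G ->
     (forall A, F A -> G A) -> conv F x -> conv G x
}.

Definition continuous (X Y : Type) (cX : convergence X) (cY : convergence Y)
  (f : X -> Y) : Prop :=
  forall F x, is_filter F -> conv cX F x -> conv cY (fmap f F) (f x).

Definition conv_group (G : zmodType) (cG : convergence G) : Prop :=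
  forall F F' x y, is_filter F -> is_filter F' ->
    conv cG F x -> conv cG F' y ->
    conv cG (fmap (fun p : G * G => p.1 - p.2) (fprod F F')) (x - y).

Definition prod_conv (X Y : Type) (cX : convergence X) (cY : convergence Y)
  (F : set_family (X * Y)) (p : X * Y) : Prop :=
  conv cX (fmap fst F) p.1 /\ conv cY (fmap snd F) p.2.

Definition hausdorff (X : Type) (cv : set_family X -> X -> Prop) : Prop :=
  forall F x y, is_filter F -> cv F x -> cv F y -> x = y.

Definition compact (X : Type) (cv : set_family X -> X -> Prop) (K : X -> Prop)
  : Prop :=
  forall U, ultrafilter U -> U K -> exists x, K x /\ cv U x.

Definition locally_compact (X : Type) (cX : convergence X) : Prop :=
  hausdorff (conv cX) /\
  forall F x, is_filter F -> conv cX F x ->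
    exists K, compact (conv cX) K /\ F K.

Definition countable_base (X : Type) (V : set_family X) : Prop :=
  exists B : nat -> X -> Prop, (forall n, V (B n)) /\
    forall A, V A -> exists n, forall z, B n z -> A z.

Definition first_countable (X : Type) (cX : convergence X) : Prop :=
  forall F x, is_filter F -> conv cX F x ->
    exists V, is_filter V /\ (forall A, V A -> F A) /\ countable_base V /\
      conv cX V x.

Definition is_topology (X : Type) (op : (X -> Prop) -> Prop) : Prop :=
  op (fun _ => True) /\
  (forall A B, op A -> op B -> op (fun z => A z /\ B z)) /\
  (forall (I : Type) (A : I -> X -> Prop), (forall i, op (A i)) ->
     op (fun z => exists i, A i z)).

Definition topological (X : Type) (cX : convergence X) : Prop :=
  exists op, is_topology op /\
    forall F x, is_filter F ->
      (conv cX F x <-> forall U, op U -> U x -> F U).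

Definition topological_group (G : zmodType) (cG : convergence G) : Prop :=
  conv_group cG /\ topological cG.

Definition is_hom (G L : zmodType) (f : G -> L) : Prop :=
  forall a b, f (a + b) = f a + f b.

Definition Gamma (G L : zmodType) (cG : convergence G) (cL : convergence L)
  := { f : G -> L | is_hom f /\ continuous cG cL f }.

Definition Gamma_s_conv (G L : zmodType) (cG : convergence G)
  (cL : convergence L) (Phi : set_family (Gamma cG cL)) (phi : Gamma cG cL)
  : Prop :=
  forall x : G, conv cL (fmap (fun psi : Gamma cG cL => proj1_sig psi x) Phi)
                        (proj1_sig phi x).

(* Equicontinuity of M in Gamma(G,L).  For empty M the generated family
   is not a proper filter; empty M is (vacuously) equicontinuous. *)
Definition equicontinuous (G L : zmodType) (cG : convergence G)
  (cL : convergence L) (M : Gamma cG cL -> Prop) : Prop :=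
  forall F, is_filter F -> conv cG F 0 -> (exists phi, M phi) ->
    conv cL (fun A : L -> Prop => exists F0, F F0 /\
               forall (phi : Gamma cG cL) (x : G), M phi -> F0 x ->
                 A (proj1_sig phi x)) 0.

Definition is_bihom (G H L : zmodType) (u : G -> H -> L) : Prop :=
  (forall y, is_hom (fun x => u x y)) /\ (forall x, is_hom (u x)).

Definition separately_continuous (G H L : Type) (cG : convergence G)
  (cH : convergence H) (cL : convergence L) (u : G -> H -> L) : Prop :=
  (forall x, continuous cH cL (u x)) /\
  (forall y, continuous cG cL (fun x => u x y)).

Definition jointly_continuous (G H L : Type) (cG : convergence G)
  (cH : convergence H) (cL : convergence L) (u : G -> H -> L) : Prop :=
  forall F p, is_filter F -> prod_conv cG cH F p ->
    conv cL (fmap (fun q : G * H => u q.1 q.2) F) (u p.1 p.2).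

Arguments Gamma_s_conv {G L} cG cL Phi phi.
Arguments equicontinuous {G L} cG cL M.
Arguments Gamma {G L} cG cL.

(* Main.v *)
Require Import Defs.
From mathcomp Require Import all_boot all_algebra.
From Stdlib Require Import Classical ClassicalEpsilon.
Import GRing.Theory.

Section Helpers.
Local Open Scope ring_scope.

Lemma idl (V : zmodType) (w b c d : V) : ((w - b) - (d - c)) - ((c - d) - b) = w.
Proof. by rewrite !opprB (addrC b) addrA -[c - d]opprB !subrK. Qed.

Lemma hom_sub (G L : zmodType) (f : G -> L) : is_hom f -> forall a b, f (a - b) = f a - f b.
Proof. move=> h a b. have := h (a - b) b. rewrite subrK => ->. by rewrite addrK. Qed.

Lemma filter_fmap {X Y : Type} (f : X -> Y) {F : set_family X} :
  is_filter F -> is_filter (fmap f F).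
Proof.
move=> [h1 [h2 [h3 h4]]]; split; [|split; [|split]].
- exact: h1.
- exact: h2.
- move=> A B hA hB; exact: (h3 _ _ hA hB).
- move=> A B hAB hA; apply: (h4 _ _ _ hA) => z; exact: hAB.
Qed.

Lemma filter_principal {X : Type} (x : X) : is_filter (principal x).
Proof.
split; [done|split; [by []|split]].
- by move=> A B hA hB; split.
- by move=> A B h; apply: h.
Qed.

Lemma filter_ne {X : Type} {F : set_family X} {A} : is_filter F -> F A -> exists x, A x.
Proof.
move=> [_ [h2 [_ h4]]] hA; apply: NNPP => hn; apply: h2; apply: (h4 A) => // z Az.
apply: hn; by exists z.
Qed.

Lemma filter_fprod {X Y : Type} {F : set_family X} {G : set_family Y} :
  is_filter F -> is_filter G -> is_filter (Defs.fprod F G).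
Proof.
move=> hF hG; have hF' := hF; have hG' := hG.
case: hF => f1 [f2 [f3 f4]]; case: hG => g1 [g2 [g3 g4]].
split; [|split; [|split]].
- by exists (fun _ => True), (fun _ => True).
- move=> [A [B [hA [hB hAB]]]].
  have [a Aa] := filter_ne hF' hA; have [b Bb] := filter_ne hG' hB.
  exact: (hAB a b Aa Bb).
- move=> S T [A [B [hA [hB hAB]]]] [A' [B' [hA' [hB' hAB']]]].
  exists (fun z => A z /\ A' z), (fun z => B z /\ B' z); split; first exact: f3.
  split; first exact: g3.
  move=> a b [? ?] [? ?]; split; [exact: hAB | exact: hAB'].
- move=> S T hST [A [B [hA [hB hAB]]]]; exists A, B; do 2 split => //.
  move=> a b ha hb; apply: hST; exact: hAB.
Qed.

Lemma conv_ext {V : Type} (c : convergence V) {T} {F : set_family T} (f g : T -> V) z :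
  is_filter F -> (forall t, f t = g t) -> conv c (fmap f F) z -> conv c (fmap g F) z.
Proof.
move=> hF e h; apply: (@conv_finer _ c (fmap f F) (fmap g F) z) => //; try exact: filter_fmap.
move=> A; rewrite /fmap => hA. case: hF => _ [_ [_ h4]]; apply: (h4 _ _ _ hA) => t; by rewrite e.
Qed.

Lemma conv_const {V : Type} (c : convergence V) {T} {F : set_family T} (a : V) :
  is_filter F -> conv c (fmap (fun _ => a) F) a.
Proof.
move=> hF; apply: (@conv_finer _ c (principal a)); [exact: filter_principal|exact: filter_fmap|idtac|exact: conv_point].
move=> A hA; rewrite /fmap; case: hF => h1 [_ [_ h4]]; by apply: (h4 (fun _ => True)).
Qed.

Lemma conv_sub {V : zmodType} {c : convergence V} : conv_group c ->
  forall T (F : set_family T) (f1 f2 : T -> V) a b, is_filter F ->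
  conv c (fmap f1 F) a -> conv c (fmap f2 F) b ->
  conv c (fmap (fun t => f1 t - f2 t) F) (a - b).
Proof.
move=> cg T F f1 f2 a b hF h1 h2.
have := cg _ _ _ _ (filter_fmap f1 hF) (filter_fmap f2 hF) h1 h2.
apply: conv_finer.
- apply: filter_fmap; apply: filter_fprod; exact: filter_fmap.
- exact: filter_fmap.
- move=> S [A [B [hA [hB hAB]]]]; rewrite /fmap.
  case: hF => _ [_ [h3 h4]]; apply: (h4 _ _ _ (h3 _ _ hA hB)) => t [? ?].
  exact: hAB.
Qed.

Definition frech : set_family nat := fun A => exists N, forall n, (N <= n)%N -> A n.

Lemma filter_frech : is_filter frech.
Proof.
split; [|split; [|split]].
- by exists 0%N.
- by move=> [N hN]; apply: (hN N).
- move=> A B [N hN] [M hM]; exists (maxn N M) => n hn; split.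
  + apply: hN; apply: leq_trans hn; exact: leq_maxl.
  + apply: hM; apply: leq_trans hn; exact: leq_maxr.
- move=> A B hAB [N hN]; exists N => n hn; apply: hAB; exact: hN.
Qed.

Variables (G H L : zmodType) (cG : convergence G) (cH : convergence H) (cL : convergence L).

Lemma assemble (u : G -> H -> L) : conv_group cL -> is_bihom u ->
  separately_continuous cG cH cL u ->
  forall T (F : set_family T) (X : T -> G) (Y : T -> H) p1 p2, is_filter F ->
  conv cG (fmap X F) p1 -> conv cH (fmap Y F) p2 ->
  conv cL (fmap (fun t => u (X t - p1) (Y t - p2)) F) 0 ->
  conv cL (fmap (fun t => u (X t) (Y t)) F) (u p1 p2).
Proof.
move=> cgL [hb1 hb2] [hs1 hs2] T F X Y p1 p2 hF hX hY ha.
have hb : conv cL (fmap (fun t => u (X t) p2) F) (u p1 p2)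
  by exact: (hs2 p2 _ _ (filter_fmap X hF) hX).
have hd : conv cL (fmap (fun t => u p1 (Y t)) F) (u p1 p2)
  by exact: (hs1 p1 _ _ (filter_fmap Y hF) hY).
have hc := conv_const cL (u p1 p2) hF.
have h1 := conv_sub cgL _ _ _ _ _ _ hF hc hd.
have h2 := conv_sub cgL _ _ _ _ _ _ hF h1 hb.
have h3 := conv_sub cgL _ _ _ _ _ _ hF ha h2.
have -> : u p1 p2 = 0 - ((u p1 p2 - u p1 p2) - u p1 p2) by rewrite subrr !sub0r opprK.
apply: (conv_ext _ _ _ _ hF _ h3) => t /=.
have e1 := hom_sub _ _ _ (hb1 (Y t - p2)) (X t) p1.
have e2 := hom_sub _ _ _ (hb2 (X t)) (Y t) p2.
have e3 := hom_sub _ _ _ (hb2 p1) (Y t) p2.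
rewrite /= in e1 e2 e3.
rewrite e1 e2 e3; exact: idl.
Qed.

Definition gmap (u : G -> H -> L) (hb : is_bihom u)
  (hs : separately_continuous cG cH cL u) (y : H) : Gamma cG cL :=
  exist _ (fun x => u x y) (conj (proj1 hb y) (proj2 hs y)).

Lemma image_compact (u : G -> H -> L) (hb : is_bihom u)
  (hs : separately_continuous cG cH cL u) (K : H -> Prop) :
  compact (conv cH) K ->
  compact (Gamma_s_conv cG cL) (fun phi => exists y, K y /\ phi = gmap u hb hs y).
Proof.
move=> hK U hU hUM.
have hsec : forall phi : Gamma cG cL, exists y,
    (exists y', K y' /\ phi = gmap u hb hs y') -> K y /\ phi = gmap u hb hs y.
  move=> phi; case: (classic (exists y', K y' /\ phi = gmap u hb hs y')) => [[y' hy']|hn].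
  - by exists y'.
  - exists 0 => h; by case: (hn h).
pose s := fun phi => proj1_sig (constructive_indefinite_description _ (hsec phi)).
have hs' : forall phi, (exists y', K y' /\ phi = gmap u hb hs y') ->
    K (s phi) /\ phi = gmap u hb hs (s phi).
  move=> phi; exact: (proj2_sig (constructive_indefinite_description _ (hsec phi))).
have hW : ultrafilter (fmap s U).
  case: hU => hUf hUu; split; first exact: filter_fmap.
  move=> A; exact: (hUu (fun phi => A (s phi))).
have hWK : fmap s U K.
  case: hU => [[_ [_ [_ h4]]] _]; apply: (h4 _ _ _ hUM) => phi hphi; exact: (hs' phi hphi).1.
case: (hK _ hW hWK) => y [Ky cy].
exists (gmap u hb hs y); split; first by exists y.
move=> x /=.
have := (proj1 hs x) _ _ (proj1 hW) cy.
apply: conv_finer; [exact: filter_fmap (proj1 hW) | exact: filter_fmap (proj1 hU) | idtac].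
move=> B hB; rewrite /fmap in hB *.
case: hU => [[_ [_ [h3 h4]]] _].
apply: (h4 _ _ _ (h3 _ _ hB hUM)) => phi [hB' hM].
have [_ e] := hs' phi hM.
have -> : proj1_sig phi x = u x (s phi) by rewrite {1}e.
exact: hB'.
Qed.

Lemma seq_compact {X : Type} (c : convergence X) (y : nat -> X) y0 :
  conv c (fmap y frech) y0 -> compact (conv c) (fun z => (exists n, z = y n) \/ z = y0).
Proof.
move=> hy U [hUf hUu] hUK.
have conv_at : forall z, U (fun w => w = z) -> conv c U z.
  move=> z hz; apply: (@conv_finer _ c (principal z) U z) => //;
    [exact: filter_principal| |exact: conv_point].
  move=> A hA; case: hUf => _ [_ [_ h4]]; apply: (h4 _ _ _ hz) => w ->; exact hA.
case: (classic (exists n, U (fun w => w = y n))) => [[n hn]|hn].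
  exists (y n); split; [left; by exists n | exact: conv_at].
case: (classic (U (fun w => w = y0))) => [h0|h0].
  exists y0; split; [by right | exact: conv_at].
exists y0; split; first by right.
have hne : forall n, U (fun w => ~ w = y n).
  move=> n; case: (hUu (fun w => w = y n)) => [h|h] //; case: hn; by exists n.
have hne0 : U (fun w => ~ w = y0).
  by case: (hUu (fun w => w = y0)) => [h|h] //; case: h0.
apply: (@conv_finer _ c (fmap y frech) U y0) => //; first exact: filter_fmap filter_frech.
move=> A [N hN].
case: hUf => _ [_ [h3 h4]].
have hI : forall N, U (fun w => ((exists n, w = y n) \/ w = y0) /\ ~ w = y0 /\
                        forall n, (n < N)%N -> ~ w = y n).
  elim=> [|m IH].
  - apply: (h4 _ _ _ (h3 _ _ hUK hne0)) => w [h1 h2]; split=> //; split=> //.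
  - apply: (h4 _ _ _ (h3 _ _ IH (hne m))) => w [[h1 [h2 h5]] h6]; split=> //; split=> // n.
    rewrite ltnS leq_eqVlt => /orP [/eqP -> //|]; exact: h5.
apply: (h4 _ _ _ (hI N)) => w [[[m ->]|->] [h2 h5]]; last by case: h2.
apply: hN; rewrite leqNgt; apply/negP => hm; exact: (h5 m hm).
Qed.

Lemma equi_step (u : G -> H -> L) (hb : is_bihom u)
  (hs : separately_continuous cG cH cL u) :
  (forall K : Gamma cG cL -> Prop,
     compact (Gamma_s_conv cG cL) K -> equicontinuous cG cL K) ->
  forall T (F : set_family T) (X : T -> G) (Y : T -> H) (K : H -> Prop), is_filter F ->
  conv cG (fmap X F) 0 -> compact (conv cH) K -> F (fun t => K (Y t)) ->
  conv cL (fmap (fun t => u (X t) (Y t)) F) 0.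
Proof.
move=> hcomp T F X Y K hF hX hK hFK.
pose M := fun phi => exists y, K y /\ phi = gmap u hb hs y.
have hM := hcomp M (image_compact u hb hs K hK).
have [t0 Kt0] := filter_ne hF hFK.
have := hM _ (filter_fmap X hF) hX
  (ex_intro _ (gmap u hb hs (Y t0)) (ex_intro _ (Y t0) (conj Kt0 erefl))).
have hF' := hF.
case: hF => h1 [h2 [h3 h4]].
apply: conv_finer; last first.
- move=> A [F0 [hF0 hA]]; rewrite /fmap.
  apply: (h4 _ _ _ (h3 _ _ hF0 hFK)) => t [h5 h6].
  exact: (hA (gmap u hb hs (Y t)) (X t) (ex_intro _ (Y t) (conj h6 erefl)) h5).
- exact: filter_fmap.
- split; [|split; [|split]].
  + exists (fun _ => True); split; [exact: h1| by []].
  + move=> [F0 [hF0 hA]]. have [t [h5 h6]] := filter_ne hF' (h3 _ _ hF0 hFK).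
    exact: (hA _ _ (ex_intro _ (Y t) (conj h6 erefl)) h5).
  + move=> A B [F0 [hF0 hA]] [F1 [hF1 hB]]; exists (fun x => F0 x /\ F1 x); split.
      exact: (h3 _ _ hF0 hF1).
    move=> phi x hphi [hx1 hx2]; split; [exact: hA|exact: hB].
  + move=> A B hAB [F0 [hF0 hA]]; exists F0; split=> // phi x hphi hx; apply: hAB; exact: hA.
Qed.

End Helpers.

Theorem proposition3p2 (G H L : zmodType)
  (cG : convergence G) (cH : convergence H) (cL : convergence L) :
  conv_group cG -> conv_group cH -> conv_group cL ->
  (forall K : Gamma cG cL -> Prop,
     compact (Gamma_s_conv cG cL) K -> equicontinuous cG cL K) ->
  forall u : G -> H -> L,
    is_bihom u -> separately_continuous cG cH cL u ->
    (locally_compact cH ->  jointly_continuous cG cH cL u) /\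
    (first_countable cG /\ first_countable cH /\ topological_group cL ->
       jointly_continuous cG cH cL u).
Proof.
move=> cgG cgH cgL hcomp u hb hs; split.
- move=> LC F p hF [h1 h2].
  have hX : conv cG (fmap (fun q : G * H => (q.1 - p.1)%R) F) 0%R.
    have := conv_sub cgG _ _ _ _ _ _ hF h1 (conv_const cG p.1 hF).
    by rewrite GRing.subrr.
  have hY : conv cH (fmap (fun q : G * H => (q.2 - p.2)%R) F) 0%R.
    have := conv_sub cgH _ _ _ _ _ _ hF h2 (conv_const cH p.2 hF).
    by rewrite GRing.subrr.
  have [K [hK hFK]] := (proj2 LC) _ _ (filter_fmap _ hF) hY.
  apply: (assemble _ _ _ cG cH cL u cgL hb hs _ F fst snd p.1 p.2 hF h1 h2).
  exact: (equi_step _ _ _ cG cH cL u hb hs hcomp _ F _ _ K hF hX hK hFK).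
- move=> [fcG [fcH [_ topL]]] F p hF [h1 h2].
  case: topL => op [hop hchar].
  apply: (proj2 (hchar _ _ (filter_fmap _ hF))) => U hU hUp.
  apply: NNPP => hnot.
  have hmeet : forall A, F A -> exists q, A q /\ ~ U (u q.1 q.2).
    move=> A hA; apply: NNPP => hn; apply: hnot; case: hF => _ [_ [_ h4]].
    apply: (h4 _ _ _ hA) => q hq; apply: NNPP => hq'; apply: hn; by exists q.
  have [V1 [hV1 [sV1 [[B1 [hB1 bB1]] cV1]]]] := fcG _ _ (filter_fmap fst hF) h1.
  have [V2 [hV2 [sV2 [[B2 [hB2 bB2]] cV2]]]] := fcH _ _ (filter_fmap snd hF) h2.
  have dec : forall (Z : Type) (V : set_family Z) (B : nat -> Z -> Prop), is_filter V ->
      (forall n, V (B n)) -> forall n, V (fun z => forall k, (k <= n)%N -> B k z).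
    move=> Z V B [_ [_ [h3 h4]]] hB; elim=> [|n IH].
    + apply: (h4 _ _ _ (hB 0%N)) => z hz k; rewrite leqn0 => /eqP ->; exact hz.
    + apply: (h4 _ _ _ (h3 _ _ IH (hB n.+1))) => z [hz1 hz2] k.
      rewrite leq_eqVlt => /orP [/eqP -> //|]; rewrite ltnS; exact: hz1.
  have hq : forall n, exists q : G * H, ((forall k, (k <= n)%N -> B1 k q.1) /\
      (forall k, (k <= n)%N -> B2 k q.2)) /\ ~ U (u q.1 q.2).
    move=> n; apply: hmeet; case: hF => _ [_ [h3 _]]; apply: h3.
    + exact: (sV1 _ (dec _ _ _ hV1 hB1 n)).
    + exact: (sV2 _ (dec _ _ _ hV2 hB2 n)).
  pose q := fun n => proj1_sig (constructive_indefinite_description _ (hq n)).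
  have hqP : forall n, ((forall k, (k <= n)%N -> B1 k (q n).1) /\
      (forall k, (k <= n)%N -> B2 k (q n).2)) /\ ~ U (u (q n).1 (q n).2).
    move=> n; exact: (proj2_sig (constructive_indefinite_description _ (hq n))).
  have cX : conv cG (fmap (fun n => (q n).1) frech) p.1.
    apply: (conv_finer hV1 (filter_fmap _ filter_frech) _ cV1).
    move=> A hA; case: (bB1 A hA) => k hk; exists k => n hn; apply: hk.
    exact: ((hqP n).1.1 k hn).
  have cY : conv cH (fmap (fun n => (q n).2) frech) p.2.
    apply: (conv_finer hV2 (filter_fmap _ filter_frech) _ cV2).
    move=> A hA; case: (bB2 A hA) => k hk; exists k => n hn; apply: hk.
    exact: ((hqP n).1.2 k hn).
  have cX' : conv cG (fmap (fun n => ((q n).1 - p.1)%R) frech) 0%R.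
    have := conv_sub cgG _ _ _ _ _ _ filter_frech cX (conv_const cG p.1 filter_frech).
    by rewrite GRing.subrr.
  have cY' : conv cH (fmap (fun n => ((q n).2 - p.2)%R) frech) 0%R.
    have := conv_sub cgH _ _ _ _ _ _ filter_frech cY (conv_const cH p.2 filter_frech).
    by rewrite GRing.subrr.
  have hK := seq_compact cH _ _ cY'.
  have hE := equi_step _ _ _ cG cH cL u hb hs hcomp _ frech _ _ _ filter_frech cX' hK
    (ex_intro _ 0%N (fun n _ => or_introl (ex_intro _ n erefl))).
  have hfin := assemble _ _ _ cG cH cL u cgL hb hs _ frech (fun n => (q n).1)
    (fun n => (q n).2) p.1 p.2 filter_frech cX cY hE.
  have [N hN] := (proj1 (hchar _ _ (filter_fmap _ filter_frech)) hfin) U hU hUp.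
  exact: ((hqP N).2 (hN N (leqnn N))).
Qed.
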